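(* In the Popularity Adjusted Block Model described in the context, suppose $\operatorname{rank}(\boldsymbol\Theta)=K^2$ and let $\boldsymbol\Xi\in\mathbb R^{n\times K^2}$ be a matrix of orthonormal eigenvectors of $\boldsymbol\Theta$ for its $K^2$ nonzero eigenvalues, with rows $\boldsymbol\xi_{i\cdot}$. Let $\tau_{ij}=|\cos(\boldsymbol\xi_{i\cdot},\boldsymbol\xi_{j\cdot})|$. Then for $i,j\in[n]$ (with $\boldsymbol\xi_{i\cdot},\boldsymbol\xi_{j\cdot}\neq0$), $$\tau_{ij}=\begin{cases}\left|\dfrac{D_{\boldsymbol P_{\boldsymbol c^\ast(i)}}(\boldsymbol\lambda_{i\cdot},\boldsymbol\lambda_{j\cdot})}{D^{1/2}_{\boldsymbol P_{\boldsymbol c^\ast(i)}}(\boldsymbol\lambda_{i\cdot},\boldsymbol\lambda_{i\cdot})\,D^{1/2}_{\boldsymbol P_{\boldsymbol c^\ast(i)}}(\boldsymbol\lambda_{j\cdot},\boldsymbol\lambda_{j\cdot})}\right|, & \boldsymbol c^\ast(i)=\boldsymbol c^\ast(j),\\[2mm] 0, & \boldsymbol c^\ast(i)\ne\boldsymbol c^\ast(j).\end{cases}$$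
   Context: Notation: $[m]=\{1,\dots,m\}$. Popularity Adjusted Block Model: integers $n$, $K\ge2$, a label vector $\boldsymbol c^\ast\in[K]^n$, a popularity matrix $\boldsymbol\Lambda=(\lambda_{ik})\in[0,1]^{n\times K}$ with rows $\boldsymbol\lambda_{i\cdot}\in\mathbb R^K$. The edge probability matrix is $\boldsymbol\Theta=(\theta_{ij})_{n\times n}$, $\theta_{ij}=\lambda_{i\boldsymbol c^\ast(j)}\lambda_{j\boldsymbol c^\ast(i)}$. For $k\in[K]$, $\boldsymbol\Lambda^{(k,\cdot)}$ is the submatrix of $\boldsymbol\Lambda$ consisting of the rows $i$ with $\boldsymbol c^\ast(i)=k$, $\boldsymbol P_k=(\boldsymbol\Lambda^{(k,\cdot)\top}\boldsymbol\Lambda^{(k,\cdot)})^{-1}$, and $D_{\boldsymbol P_k}(\boldsymbol x,\boldsymbol y)=\boldsymbol x^\top\boldsymbol P_k\boldsymbol y$ for $\boldsymbol x,\boldsymbol y\in\mathbb R^K$. $\cos(\boldsymbol x,\boldsymbol y)=\boldsymbol x^\top\boldsymbol y/(\|\boldsymbol x\|\|\boldsymbol y\|)$. *)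

(* Defs.v *)
From HB Require Import structures.
From mathcomp Require Import all_boot all_order all_algebra.
Set Implicit Arguments. Unset Strict Implicit. Unset Printing Implicit Defensive.
Import Order.TTheory GRing.Theory Num.Theory.
Local Open Scope ring_scope.

Section PABM.
Variable R : rcfType.

Definition pabm_Theta (n K : nat) (c : 'I_n -> 'I_K) (Lam : 'M[R]_(n, K))
  : 'M[R]_n := \matrix_(i, j) (Lam i (c j) * Lam j (c i)).

(* Lambda^{(k,.)T} Lambda^{(k,.)} : sum over the rows i with c(i) = k *)
Definition pabm_gram (n K : nat) (c : 'I_n -> 'I_K) (Lam : 'M[R]_(n, K))
  (k : 'I_K) : 'M[R]_K :=
  \matrix_(a, b) \sum_(i < n | c i == k) Lam i a * Lam i b.

Definition pabm_P (n K : nat) (c : 'I_n -> 'I_K) (Lam : 'M[R]_(n, K))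
  (k : 'I_K) : 'M[R]_K := invmx (pabm_gram c Lam k).

Definition DP (K : nat) (P : 'M[R]_K) (x y : 'rV[R]_K) : R :=
  (x *m P *m y^T) 0 0.

Definition dotv (m : nat) (u v : 'rV[R]_m) : R := (u *m v^T) 0 0.
Definition normv (m : nat) (u : 'rV[R]_m) : R := Num.sqrt (dotv u u).
Definition cosv (m : nat) (u v : 'rV[R]_m) : R :=
  dotv u v / (normv u * normv v).

End PABM.

(* Main.v *)
Require Import Defs.
From HB Require Import structures.
From mathcomp Require Import all_boot all_order all_algebra.
Import Order.TTheory GRing.Theory Num.Theory.
Local Open Scope ring_scope.

Section Pairs.
Variable K : nat.
Lemma cardKK : #|{: 'I_K * 'I_K}| = (K ^ 2)%N.
Proof. by rewrite card_prod card_ord mulnn. Qed.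
Definition pg (a : 'I_(K^2)) : 'I_K * 'I_K := enum_val (cast_ord (esym cardKK) a).
Definition ph (x : 'I_K * 'I_K) : 'I_(K^2) := cast_ord cardKK (enum_rank x).
Lemma pgK : cancel ph pg.
Proof. by move=> x; rewrite /pg /ph cast_ordK enum_rankK. Qed.
Lemma phK : cancel pg ph.
Proof. by move=> a; rewrite /pg /ph enum_valK -{2}(cast_ordK (esym cardKK) a) esymK. Qed.
Lemma sum_pairs (R : nmodType) (F : 'I_K -> 'I_K -> R) :
  \sum_(a < K^2) F (pg a).1 (pg a).2 = \sum_k \sum_l F k l.
Proof.
rewrite pair_big /= (reindex ph) /=; last by exists pg => x _; [exact: pgK|exact: phK].
by apply: eq_bigr => x _; rewrite pgK.
Qed.
End Pairs.
Arguments pg {K}. Arguments ph {K}. Arguments sum_pairs {K R}. Arguments pgK {K}. Arguments phK {K}.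

Section Abstract.
Variable R : fieldType.
Variables (n p : nat) (X Xi : 'M[R]_(n, p)) (B : 'M[R]_p).
Hypothesis o : Xi^T *m Xi = 1%:M.
Hypothesis e : Xi = X *m B.

Lemma unitB : B \in unitmx.
Proof.
have h : B^T *m (X^T *m X *m B) = 1%:M by rewrite -o e trmx_mul !mulmxA.
by have [] := mulmx1_unit h; rewrite unitmx_tr.
Qed.

Lemma XE : X = Xi *m invmx B.
Proof. by rewrite e mulmxK // unitB. Qed.

Lemma Xinj (w : 'cV[R]_p) : X *m w = 0 -> w = 0.
Proof.
move=> h.
have h2 : invmx B *m w = 0.
  by rewrite -[invmx B *m w]mul1mx -o -mulmxA (mulmxA Xi) -XE h mulmx0.
by rewrite -(mulKVmx unitB w) h2 mulmx0.
Qed.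

Lemma proj_eq (Z : 'M[R]_n) (D : 'M[R]_(p, n)) :
  Z^T = Z -> Z = X *m D -> Z *m X = X -> Xi *m Xi^T = Z.
Proof.
move=> zs zd zx.
set P := Xi *m Xi^T.
have px : P *m X = X by rewrite /P {1}XE !mulmxA -(mulmxA Xi Xi^T Xi) o mulmx1 -XE.
have pc : P = X *m (B *m Xi^T) by rewrite /P {1}e mulmxA.
have ps : P^T = P by rewrite /P trmx_mul trmxK.
have zp : Z *m P = P by rewrite pc mulmxA zx.
have pz : P *m Z = Z by rewrite {1}zd mulmxA px -zd.
by rewrite -ps -zp trmx_mul ps zs pz.
Qed.
End Abstract.

Section Concrete.
Variable R : rcfType.
Variables (n K : nat) (c : 'I_n -> 'I_K) (Lam : 'M[R]_(n, K)).

Definition Xm : 'M[R]_(n, K^2) :=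
  \matrix_(i, a) (if c i == (pg a).1 then Lam i (pg a).2 else 0).
Definition Mm : 'M[R]_(K^2, n) :=
  \matrix_(a, j) (if c j == (pg a).2 then Lam j (pg a).1 else 0).

Lemma Theta_XM : pabm_Theta c Lam = Xm *m Mm.
Proof.
apply/matrixP => i j; rewrite !mxE.
under eq_bigr => a _ do rewrite !mxE.
rewrite (sum_pairs (fun k l => (if c i == k then Lam i l else 0) *
                               (if c j == l then Lam j k else 0))).
rewrite (bigD1 (c i)) //= [X in _ + X]big1 ?addr0; last first.
  by move=> k nk; rewrite big1 // => l _; rewrite eq_sym (negbTE nk) mul0r.
rewrite eqxx (bigD1 (c j)) //= eqxx [X in _ + X]big1 ?addr0 // => l nl.
by rewrite eq_sym (negbTE nl) mulr0.
Qed.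

Lemma dot0 m (u : 'rV[R]_m) : u *m u^T = 0 -> u = 0.
Proof.
move=> /matrixP/(_ 0 0); rewrite !mxE.
under eq_bigr => l _ do rewrite !mxE.
move=> h; apply/matrixP => a l; rewrite ord1 !mxE.
have H : forall l', true -> 0 <= u 0 l' * u 0 l' by move=> l' _; rewrite -expr2 sqr_ge0.
have := psumr_eq0P H.
move=> /(_ h l isT) /eqP; rewrite mulf_eq0 orbb => /eqP //.
Qed.

Lemma gram_unit k : (forall w : 'cV[R]_(K^2), Xm *m w = 0 -> w = 0) ->
  pabm_gram c Lam k \in unitmx.
Proof.
move=> inj; rewrite unitmxE unitfE; apply/det0P => -[v vn0 vg].
apply: (negP vn0).
pose L : 'M[R]_(n, K) := \matrix_(j, a) (if c j == k then Lam j a else 0).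
have gL : pabm_gram c Lam k = L^T *m L.
  apply/matrixP => a b; rewrite !mxE big_mkcond /=; apply: eq_bigr => j _.
  by rewrite !mxE; case: ifP => _; rewrite ?mul0r.
have u0 : v *m L^T = 0.
  apply: dot0; rewrite trmx_mul trmxK mulmxA -(mulmxA v) -gL vg mul0mx //.
pose w : 'cV[R]_(K^2) := \col_a (if (pg a).1 == k then v 0 (pg a).2 else 0).
have Xw : Xm *m w = 0.
  apply/matrixP => i z; rewrite !mxE.
  under eq_bigr => a _ do rewrite !mxE.
  rewrite (sum_pairs (fun k' l => (if c i == k' then Lam i l else 0) *
                               (if k' == k then v 0 l else 0))).
  rewrite (bigD1 k) //= [X in _ + X]big1 ?addr0; last first.
    by move=> k' nk; rewrite big1 // => l _; rewrite (negbTE nk) mulr0.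
  transitivity ((v *m L^T) 0 i); last by rewrite u0 mxE.
  rewrite !mxE; apply: eq_bigr => l _; rewrite !mxE eqxx mulrC.
  by case: ifP.
apply/eqP/matrixP => z l; rewrite ord1 mxE.
have := congr1 (fun A : 'cV[R]_(K^2) => A (ph (k, l)) 0) (inj _ Xw).
by rewrite !mxE pgK eqxx.
Qed.

End Concrete.
Arguments Xm {R n K}. Arguments Mm {R n K}. Arguments Theta_XM {R n K}. Arguments gram_unit {R n K}.

Section Concrete2.
Variable R : rcfType.
Variables (n K : nat) (c : 'I_n -> 'I_K) (Lam : 'M[R]_(n, K)).
Local Notation P := (pabm_P c Lam).

Definition Zm : 'M[R]_n := \matrix_(i, j)
  (if c i == c j then DP (P (c i)) (row i Lam) (row j Lam) else 0).
Definition Dm : 'M[R]_(K^2, n) := \matrix_(a, j)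
  (if c j == (pg a).1 then (P (c j) *m (row j Lam)^T) (pg a).2 0 else 0).

Lemma Psym k : (P k)^T = P k.
Proof.
rewrite /pabm_P trmx_inv; congr invmx; apply/matrixP => a b; rewrite !mxE.
by apply: eq_bigr => j _; rewrite mulrC.
Qed.

Lemma DPsym k (x y : 'rV[R]_K) : DP (P k) y x = DP (P k) x y.
Proof.
rewrite /DP; transitivity ((y *m P k *m x^T)^T 0 0); first by rewrite [RHS]mxE.
by rewrite !trmx_mul trmxK Psym mulmxA.
Qed.

Lemma Zsym : Zm^T = Zm.
Proof.
apply/matrixP => i j; rewrite !mxE eq_sym; case: eqP => // e.
by rewrite e DPsym.
Qed.

Lemma Z_XD : Zm = Xm c Lam *m Dm.
Proof.
apply/matrixP => i j; rewrite !mxE.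
under eq_bigr => a _ do rewrite !mxE.
rewrite (sum_pairs (fun k l => (if c i == k then Lam i l else 0) *
       (if c j == k then \sum_j0 P (c j) l j0 * (row j Lam)^T j0 0 else 0))).
rewrite (bigD1 (c i)) //= [X in _ + X]big1 ?addr0; last first.
  by move=> k nk; rewrite big1 // => l _; rewrite eq_sym (negbTE nk) mul0r.
rewrite eqxx; case: (eqVneq (c i) (c j)) => e.
  rewrite /DP -mulmxA mxE; apply: eq_bigr => l _; by rewrite !mxE e.
by rewrite big1 // => l _; rewrite mulr0.
Qed.

Lemma ZX : (forall k, pabm_gram c Lam k \in unitmx) -> Zm *m Xm c Lam = Xm c Lam.
Proof.
move=> gu; apply/matrixP => i a; rewrite !mxE.
under eq_bigr => j _ do rewrite !mxE.
case: (eqVneq (c i) (pg a).1) => e; last first.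
  rewrite big1 // => j _; case: (eqVneq (c i) (c j)) => [e2|]; last by rewrite mul0r.
  by rewrite -e2 (negbTE e) mulr0.
rewrite -e.
transitivity ((row i Lam *m P (c i) *m pabm_gram c Lam (c i)) 0 (pg a).2); last first.
  by rewrite -mulmxA mulVmx // mulmx1 mxE.
rewrite mxE.
under [RHS]eq_bigr => v _ do rewrite [pabm_gram _ _ _ _ _]mxE big_distrr /=.
rewrite exchange_big /= [RHS]big_mkcond /=; apply: eq_bigr => j _.
rewrite [c j == c i]eq_sym; case: ifP => _; last by rewrite mul0r.
rewrite /DP mxE big_distrl /=; apply: eq_bigr => v _.
by rewrite !mxE mulrA.
Qed.

End Concrete2.
Arguments Zm {R n K}. Arguments Dm {R n K}. Arguments Zsym {R n K}.
Arguments Z_XD {R n K}. Arguments ZX {R n K}.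

Lemma dotE (R : rcfType) n p (A : 'M[R]_(n, p)) i j :
  dotv (row i A) (row j A) = (A *m A^T) i j.
Proof. by rewrite /dotv !mxE; apply: eq_bigr => l _; rewrite !mxE. Qed.

Theorem corollary1 (R : rcfType) (n K : nat) (c : 'I_n -> 'I_K)
  (Lam : 'M[R]_(n, K)) (Xi : 'M[R]_(n, K ^ 2)) :
  (2 <= K)%N ->
  (forall i k, 0 <= Lam i k <= 1) ->
  \rank (pabm_Theta c Lam) = (K ^ 2)%N ->
  (* Xi has orthonormal columns, which are eigenvectors of Theta
     for its K^2 nonzero eigenvalues *)
  Xi^T *m Xi = 1%:M ->
  (exists d : 'rV[R]_(K ^ 2),
      (forall l, d 0 l != 0) /\ pabm_Theta c Lam *m Xi = Xi *m diag_mx d) ->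
  forall i j : 'I_n,
    row i Xi != 0 -> row j Xi != 0 ->
    `| cosv (row i Xi) (row j Xi) | =
    (if c i == c j then
       `| DP (pabm_P c Lam (c i)) (row i Lam) (row j Lam) /
          (Num.sqrt (DP (pabm_P c Lam (c i)) (row i Lam) (row i Lam)) *
           Num.sqrt (DP (pabm_P c Lam (c i)) (row j Lam) (row j Lam))) |
     else 0).
Proof.
move=> _ _ _ o [d [dn0 hd]] i j _ _.
pose d' : 'rV[R]_(K ^ 2) := \row_l (d 0 l)^-1.
have dd : diag_mx d *m diag_mx d' = 1%:M.
  apply/matrixP => a b; rewrite mul_diag_mx !mxE.
  by case: eqP => [->|_]; rewrite ?mulr1n ?mulr0n ?mulr0 // mulfV.
have eXi : Xi = Xm c Lam *m (Mm c Lam *m (Xi *m diag_mx d')).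
  by rewrite !mulmxA -Theta_XM hd -mulmxA dd mulmx1.
have inj := @Xinj _ _ _ _ _ _ o eXi.
have gu : forall k, pabm_gram c Lam k \in unitmx by move=> k; exact: gram_unit.
have PZ := @proj_eq _ _ _ _ _ _ o eXi _ _ (Zsym c Lam) (Z_XD c Lam) (ZX c Lam gu).
rewrite /cosv /normv !dotE PZ !mxE !eqxx.
case: (eqVneq (c i) (c j)) => [e|ne]; last by rewrite mul0r normr0.
by rewrite e.
Qed.
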